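(* Run the Algorithm with an arbitrary admissible weight sequence. Let $\epsilon\in(0,1)$ and let $\mathcal T_1\ge 0$ be an integer such that (on the realization considered) $(1-\epsilon)\lambda_{\min} I\preceq\tilde H_t\preceq(1+\epsilon)\lambda_{\max} I$ for all $t\ge\mathcal T_1$ (e.g. on the event $\mathcal E$ of the positive-definiteness lemma under uniform averaging). Set $$\phi=\frac{4\rho\beta(1-\beta)(1-\epsilon)}{\kappa^2(1+\epsilon)}.$$ Then $f(x_{t+1})-f(x^\star)\le (1-\phi)\bigl(f(x_t)-f(x^\star)\bigr)$ for all $t\ge\mathcal T_1$, and consequently, for all $t\ge \mathcal T_1$, $$\|x_t-x^\star\|\le\Bigl\{\tfrac{2}{\lambda_{\min}}\bigl(f(x_0)-f(x^\star)\bigr)(1-\phi)^{t-\mathcal T_1}\Bigr\}^{1/2},\qquad \|x_t-x^\star\|_{H^\star}\le\Bigl\{2\kappa\bigl(f(x_0)-f(x^\star)\bigr)(1-\phi)^{t-\mathcal T_1}\Bigr\}^{1/2}.$$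
   Context: Setting. $f:\mathbb{R}^d\to\mathbb{R}$ is twice continuously differentiable with Hessian $H(x)=\nabla^2 f(x)$ satisfying $\lambda_{\min} I\preceq H(x)\preceq \lambda_{\max} I$ for all $x\in\mathbb{R}^d$, where $0<\lambda_{\min}\le\lambda_{\max}$; $\kappa=\lambda_{\max}/\lambda_{\min}$; $x^\star$ is the unique minimizer of $f$ and $H^\star=H(x^\star)$. $\|\cdot\|$ is the Euclidean norm for vectors and the spectral norm for matrices; $\|v\|_A=\sqrt{v^\top A v}$ for $A\succeq 0$. Stochastic Hessian oracle: queried at $x$, it returns $\hat H(x)=H(x)+E(x)$, where $E(x)$ is a random symmetric $d\times d$ matrix. Algorithm (stochastic Newton with Hessian averaging). Inputs: deterministic $x_0\in\mathbb{R}^d$, a nondecreasing nonnegative weight sequence $(w_t)_{t\ge -1}$ with $w_{-1}=0$ and $w_t>0$ for $t\ge 0$, constants $\beta\in(0,1/2)$, $\rho\in(0,1)$, and $\tilde H_{-1}=0$. For $t=0,1,2,\dots$: (1) query the oracle at $x_t$ to obtain $\hat H_t=H_t+E_t$, $H_t=H(x_t)$, where conditionally on all randomness generated before iteration $t$, $E_t$ has the law of $E(x_t)$; (2) set $\tilde H_t=\frac{w_{t-1}}{w_t}\tilde H_{t-1}+\bigl(1-\frac{w_{t-1}}{w_t}\bigr)\hat H_t$; (3) if the system $\tilde H_t p=-\nabla f(x_t)$ has no solution, or its solution $p_t$ satisfies $\nabla f(x_t)^\top p_t\ge 0$, set $x_{t+1}=x_t$; (4) otherwise let $\mu_t=\rho^{j_t}$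 where $j_t$ is the smallest nonnegative integer with $f(x_t+\mu_t p_t)\le f(x_t)+\mu_t\beta\nabla f(x_t)^\top p_t$, and set $x_{t+1}=x_t+\mu_t p_t$. *)

(* Defs.v *)
From HB Require Import structures.
From mathcomp Require Import all_boot all_order all_algebra.
From mathcomp Require Import all_classical all_reals all_analysis.
Set Implicit Arguments. Unset Strict Implicit. Unset Printing Implicit Defensive.
Import Order.TTheory GRing.Theory Num.Theory.
Import numFieldNormedType.Exports.
Local Open Scope ring_scope.

Section Defs.
Variables (R : realType) (d : nat).
Notation vec := 'cV[R]_d.
Notation mat := 'M[R]_d.

Definition dotv (u v : vec) : R := \sum_(i < d) u i 0 * v i 0.
Definition enorm (v : vec) : R := Num.sqrt (dotv v v).
Definition qform (A : mat) (v : vec) : R := (v^T *m A *m v) 0 0.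
Definition Anorm (A : mat) (v : vec) : R := Num.sqrt (qform A v).
Definition loewner_le (A B : mat) : Prop := forall v : vec, qform A v <= qform B v.

(* weights with the convention w_{-1} = 0, Htilde_{-1} = 0 *)
Definition wprev (w : nat -> R) (t : nat) : R :=
  if t is t'.+1 then w t' else 0.
Definition Hprev (Ht : nat -> mat) (t : nat) : mat :=
  if t is t'.+1 then Ht t' else 0.

(* One realization of the stochastic Newton method with Hessian averaging.
   x : iterates, E : realized oracle noise, Ht : averaged Hessians,
   p : (a) solution of Ht t p = - grad f (x t), whenever one exists. *)
Definition armijo (f : vec -> R) (g : vec -> vec) (beta : R)
    (x p : vec) (mu : R) : Prop :=
  f (x + mu *: p) <= f x + mu * beta * dotv (g x) p.

Definition is_run (f : vec -> R) (g : vec -> vec) (H : vec -> mat)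
    (w : nat -> R) (beta rho : R) (x0 : vec)
    (E : nat -> mat) (Ht : nat -> mat) (p : nat -> vec) (x : nat -> vec) : Prop :=
  [/\ x 0%N = x0,
      forall t, (E t)^T = E t,
      forall t, Ht t = (wprev w t / w t) *: Hprev Ht t
                       + (1 - wprev w t / w t) *: (H (x t) + E t),
      forall t, (exists q : vec, Ht t *m q = - g (x t)) -> Ht t *m p t = - g (x t)
    & forall t,
      if `[< (~ exists q : vec, Ht t *m q = - g (x t)) \/ 0 <= dotv (g (x t)) (p t) >]
      then x t.+1 = x t
      else exists j : nat,
        [/\ armijo f g beta (x t) (p t) (rho ^+ j),
            forall i : nat, (i < j)%N -> ~ armijo f g beta (x t) (p t) (rho ^+ i)
          & x t.+1 = x t + rho ^+ j *: p t]].
End Defs.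

(* Main.v *)
Require Import Defs.
From HB Require Import structures.
From mathcomp Require Import all_boot all_order all_algebra.
From mathcomp Require Import all_classical all_reals all_analysis.
From mathcomp Require Import ring lra.
Import Order.TTheory GRing.Theory Num.Theory.
Import numFieldNormedType.Exports.
Local Open Scope ring_scope.
Set Implicit Arguments. Unset Strict Implicit.

Section LA.
Context {R : realType} {d : nat}.
Implicit Types (u v w : 'cV[R]_d) (A B : 'M[R]_d).

Lemma dotvE u v : dotv u v = (u^T *m v) 0 0.
Proof. by rewrite /dotv mxE; apply: eq_bigr => i _; rewrite mxE. Qed.

Lemma dotvC u v : dotv u v = dotv v u.
Proof. by rewrite /dotv; apply: eq_bigr => i _; rewrite mulrC. Qed.

Lemma dotvDr u v w : dotv u (v + w) = dotv u v + dotv u w.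
Proof. by rewrite !dotvE mulmxDr mxE. Qed.

Lemma dotvDl u v w : dotv (v + w) u = dotv v u + dotv w u.
Proof. by rewrite dotvC dotvDr !(dotvC u). Qed.

Lemma dotvZr (a : R) u v : dotv u (a *: v) = a * dotv u v.
Proof. by rewrite !dotvE -scalemxAr mxE. Qed.

Lemma dotvZl (a : R) u v : dotv (a *: u) v = a * dotv u v.
Proof. by rewrite dotvC dotvZr dotvC. Qed.

Lemma dotvNr u v : dotv u (- v) = - dotv u v.
Proof. by rewrite -scaleN1r dotvZr mulN1r. Qed.

Lemma dotvNl u v : dotv (- u) v = - dotv u v.
Proof. by rewrite dotvC dotvNr dotvC. Qed.

Lemma dotvBr u v w : dotv u (v - w) = dotv u v - dotv u w.
Proof. by rewrite dotvDr dotvNr. Qed.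

Lemma dotvBl u v w : dotv (v - w) u = dotv v u - dotv w u.
Proof. by rewrite dotvDl dotvNl. Qed.

Lemma dotv0r u : dotv u 0 = 0.
Proof. by rewrite /dotv big1 // => i _; rewrite mxE mulr0. Qed.

Lemma dotvv_ge0 v : 0 <= dotv v v.
Proof. by rewrite /dotv sumr_ge0 // => i _; rewrite -expr2 sqr_ge0. Qed.

Lemma dotvv_eq0 v : dotv v v = 0 -> v = 0.
Proof.
rewrite /dotv => h; apply/matrixP => i j; rewrite ord1 mxE.
have H0 : forall k : 'I_d, predT k -> 0 <= v k 0 * v k 0.
  by move=> k _; rewrite -expr2 sqr_ge0.
have := psumr_eq0P H0 h isT (i:=i).
by move/eqP; rewrite mulf_eq0 orbb => /eqP.
Qed.

Lemma qformE A v : qform A v = dotv v (A *m v).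
Proof. by rewrite /qform dotvE mulmxA. Qed.

Lemma qform_scalar (a : R) v : qform (a%:M) v = a * dotv v v.
Proof. by rewrite qformE mul_scalar_mx dotvZr. Qed.

Definition symb A := forall u v, dotv u (A *m v) = dotv v (A *m u).

Lemma symbD A B : symb A -> symb B -> symb (A + B).
Proof. by move=> hA hB u v; rewrite !mulmxDl !dotvDr hA hB. Qed.

Lemma symbZ (a : R) A : symb A -> symb (a *: A).
Proof. by move=> hA u v; rewrite -!scalemxAl !dotvZr hA. Qed.

Lemma symb0 : symb 0.
Proof. by move=> u v; rewrite !mul0mx !dotv0r. Qed.

Lemma symb_tr A : A^T = A -> symb A.
Proof.
move=> hA u v; rewrite !dotvE.
have -> : v^T *m (A *m u) = (u^T *m (A *m v))^T.
  by rewrite !trmx_mul hA trmxK mulmxA.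
by rewrite [in RHS]mxE.
Qed.


Lemma discr_le (a b c : R) : 0 <= c -> (forall t : R, 0 <= a + 2 * t * b + t ^+ 2 * c) ->
  b ^+ 2 <= a * c.
Proof.
move=> c0 h; have [cpos|] := ltP 0 c.
  have := h (- b / c).
  have -> : a + 2 * (- b / c) * b + (- b / c) ^+ 2 * c = (a * c - b ^+ 2) / c.
    by field; rewrite gt_eqF.
  by move=> h1; have := mulr_ge0 h1 (ltW cpos); rewrite divfK ?gt_eqF // subr_ge0.
move=> cle; have c00 : c = 0 by apply/eqP; rewrite eq_le cle c0.
rewrite c00 mulr0; have [b0|bn0] := eqVneq b 0; first by rewrite b0 expr0n.
have := h (- (a + 1) / (2 * b)); rewrite c00 mulr0 addr0.
have -> : 2 * (- (a + 1) / (2 * b)) * b = - (a + 1) by field.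
by lra.
Qed.

Lemma cs_bound A p (M : R) : 0 <= M -> symb A -> (forall v, 0 <= qform A v) ->
  (forall v, qform A v <= M * dotv v v) ->
  dotv (A *m p) (A *m p) <= M * qform A p.
Proof.
move=> M0 hs hpos hM.
set X := dotv (A *m p) (A *m p).
have X0 : 0 <= X by apply: dotvv_ge0.
have hq := hM (A *m p).
have key : X ^+ 2 <= qform A p * qform A (A *m p).
  apply: discr_le; first exact: hpos.
  move=> t; have := hpos (p + t *: (A *m p)).
  rewrite !qformE mulmxDr -scalemxAr !dotvDl !dotvDr !dotvZl !dotvZr.
  have -> : dotv p (A *m (A *m p)) = X by rewrite hs.
  set Z := dotv (A *m p) (A *m (A *m p)); set S := dotv p (A *m p).
  move=> h. suff -> : S + 2 * t * X + t ^+ 2 * Z = S + t * X + (t * X + t * (t * Z)) by [].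
  by ring.
have s0 := hpos p.
set s := qform A p in key s0 *; set Q := qform A (A *m p) in key hq.
have h1 : s * Q <= s * (M * X) by rewrite ler_wpM2l.
have h2 : X ^+ 2 <= (s * M) * X by rewrite mulrA in h1; apply: le_trans key h1.
rewrite mulrC; have [Xp|] := ltP 0 X; last first.
  by move=> XX; apply: le_trans XX _; rewrite mulr_ge0.
by rewrite expr2 in h2; rewrite -(ler_pM2r Xp).
Qed.

Lemma solvable_pd A (m : R) : 0 < m -> (forall v, m * dotv v v <= qform A v) ->
  forall b : 'cV[R]_d, exists q, A *m q = b.
Proof.
move=> m0 hm b.
have uA : A \in unitmx.
  rewrite -unitmx_tr -row_free_unit; apply: inj_row_free => v hv.
  have hq : qform A v^T = 0.
    rewrite qformE.
    have -> : A *m v^T = (v *m A^T)^T by rewrite trmx_mul trmxK.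
    by rewrite hv linear0 dotv0r.
  have := hm v^T; rewrite hq => hle.
  have h0 : dotv v^T v^T = 0.
    apply/eqP; rewrite eq_le dotvv_ge0 andbT.
    by rewrite -(ler_pM2l m0) mulr0.
  by rewrite -(trmxK v) (dotvv_eq0 h0) linear0.
by exists (invmx A *m b); rewrite mulmxA mulmxV // mul1mx.
Qed.

End LA.
Section Calc.
Local Open Scope classical_set_scope.
Local Open Scope ring_scope.
Context {R : realType} {d : nat}.
Local Notation vec := 'cV[R]_d.

Lemma line_derive (W : normedModType R) (F : vec -> W) (x v : vec) (s : R) :
  differentiable F (x + s *: v) ->
  is_derive s 1 (fun s => F (x + s *: v)) ('d F (x + s *: v) v).
Proof.
move=> dF.
have E : (fun h : R => h^-1 *: (((fun s => F (x + s *: v)) \o shift s) (h *: 1)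
             - F (x + s *: v))) =
         (fun h : R => h^-1 *: ((F \o shift (x + s *: v)) (h *: v) - F (x + s *: v))).
  apply/funext => h /=; congr (_ *: (F _ - _)).
  by rewrite [h%:A]mulr1 scalerDl addrCA.
split.
  by have := @diff_derivable _ _ _ _ _ v dF; rewrite /derivable E.
by rewrite /derive E -/(derive F (x + s *: v) v) deriveE.
Qed.

Lemma comp_derive (G : R -> vec) (dG : vec) (s : R) (i : 'I_d) (j : 'I_1) :
  is_derive s 1 G dG -> is_derive s 1 (fun t => G t i j) (dG i j).
Proof.
move=> [dv dval].
have dc := (derivable_mxP G s 1).1 dv i j.
split => //.
by rewrite -dval derive_mx // mxE.
Qed.

Lemma dot_derive (G : R -> vec) (dG v : vec) (s : R) :
  is_derive s 1 G dG -> is_derive s 1 (fun t => dotv (G t) v) (dotv dG v).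
Proof.
move=> hG.
have E : (fun t => dotv (G t) v) = \sum_(i < d) (fun t => v i 0 *: G t i 0).
  rewrite fct_sumE; apply/funext => t; rewrite /dotv.
  by apply: eq_bigr => i _; rewrite mulrC.
have E2 : dotv dG v = \sum_(i < d) v i 0 *: dG i 0.
  by rewrite /dotv; apply: eq_bigr => i _; rewrite mulrC.
rewrite E E2; apply: is_derive_sum => i.
exact: is_deriveZ (comp_derive i 0 hG).
Qed.

Lemma cont_of_derive (F dF : R -> R) (a b : R) :
  (forall s : R, is_derive s (1:R) F (dF s)) -> {within `[a, b], continuous F}.
Proof.
move=> h; apply: derivable_within_continuous => x _.
by have [] := h x.
Qed.

Lemma taylor_up (phi psi psi' : R -> R) (c : R) :
  (forall s : R, is_derive s (1:R) phi (psi s)) ->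
  (forall s : R, is_derive s (1:R) psi (psi' s)) ->
  (forall s, 0 <= s <= 1 -> psi' s <= c) ->
  phi 1 <= phi 0 + psi 0 + c / 2.
Proof.
move=> hphi hpsi hc.
pose P1 := psi - (cst (psi 0)) - c \*: (@id R).
pose P := phi - (psi 0) \*: (@id R) - (c / 2) \*: ((@id R) * (@id R)).
have P1E : forall s, P1 s = psi s - psi 0 - c * s by move=> s; rewrite /P1 !fctE.
have PE : forall s, P s = phi s - psi 0 * s - c / 2 * (s * s) by move=> s; rewrite /P !fctE.
have sE : forall a b : R, a *: b = a * b by [].
have dP : forall s : R, is_derive s (1:R) P (P1 s).
  move=> s; apply: is_derive_eq; rewrite P1E.
  by rewrite !sE !mulr1; field.
have dP1 : forall s : R, is_derive s (1:R) P1 (psi' s - c).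
  move=> s; apply: is_derive_eq.
  by rewrite !sE !mulr1 subr0.
have [xi xi01 E1] := MVT (@ltr01 R) (fun x _ => dP x) (cont_of_derive dP).
have xi0 : 0 < xi by rewrite (itvP xi01).
have xi1 : xi < 1 by rewrite (itvP xi01).
have [eta eta01 E2] := MVT xi0 (fun x _ => dP1 x) (cont_of_derive dP1).
have heta : psi' eta - c <= 0.
  rewrite subr_le0 hc // ltW ?(itvP eta01) //=.
  by rewrite (le_trans _ (ltW xi1)) // ltW ?(itvP eta01).
have P1xi : P1 xi <= 0.
  have : P1 xi - P1 0 <= 0 by rewrite E2 mulr_le0_ge0 // subr_ge0 ltW.
  by rewrite !P1E; lra.
move: E1; rewrite !PE => E1.
have : P 1 - P 0 <= 0 by rewrite E1 mulr_le0_ge0 // subr_ge0 ler01.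
rewrite !PE; lra.
Qed.

Lemma taylor_lo (phi psi psi' : R -> R) (c : R) :
  (forall s : R, is_derive s (1:R) phi (psi s)) ->
  (forall s : R, is_derive s (1:R) psi (psi' s)) ->
  (forall s, 0 <= s <= 1 -> c <= psi' s) ->
  phi 0 + psi 0 + c / 2 <= phi 1.
Proof.
move=> hphi hpsi hc.
have := @taylor_up (- phi) (- psi) (- psi') (- c).
have h1 : forall s : R, is_derive s (1:R) (- phi) ((- psi) s).
  by move=> s; apply: is_derive_eq; rewrite fctE.
have h2 : forall s : R, is_derive s (1:R) (- psi) ((- psi') s).
  by move=> s; apply: is_derive_eq; rewrite fctE.
move=> /(_ h1 h2) => /(_ _) h.
have h3 : forall s, 0 <= s <= 1 -> (- psi') s <= - c by move=> s hs; rewrite fctE lerN2 hc.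
have := h h3; rewrite !fctE; lra.
Qed.

End Calc.
Section FM.
Local Open Scope classical_set_scope.
Local Open Scope ring_scope.
Context {R : realType} {d : nat}.
Local Notation vec := 'cV[R]_d.
Variables (f : vec -> R) (g : vec -> vec) (H : vec -> 'M[R]_d) (lmin lmax : R).
Hypotheses (Hfd : forall x, differentiable f x)
  (Hgrad : forall x v, 'd f x v = dotv (g x) v)
  (Hgd : forall x, differentiable g x)
  (Hhess : forall x v, 'd g x v = H x *m v)
  (Hbounds : forall x, loewner_le (lmin%:M) (H x) /\ loewner_le (H x) (lmax%:M)).

Lemma f_line x v s : is_derive s (1:R) (fun s => f (x + s *: v)) (dotv (g (x + s *: v)) v).
Proof. by rewrite -Hgrad; apply: line_derive. Qed.

Lemma g_line y w v s : is_derive s (1:R) (fun s => dotv (g (y + s *: w)) v)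
  (dotv (H (y + s *: w) *m w) v).
Proof. by apply: dot_derive; rewrite -Hhess; apply: line_derive. Qed.

Lemma qH_lo x v : lmin * dotv v v <= qform (H x) v.
Proof. by rewrite -qform_scalar; apply: (proj1 (Hbounds x)). Qed.

Lemma qH_up x v : qform (H x) v <= lmax * dotv v v.
Proof. by rewrite -qform_scalar; apply: (proj2 (Hbounds x)). Qed.

Lemma f_up x v : f (x + v) <= f x + dotv (g x) v + lmax / 2 * dotv v v.
Proof.
have := taylor_up (c := lmax * dotv v v) (f_line x v) (g_line x v v).
rewrite scale1r scale0r addr0 mulrAC; apply => s _.
by rewrite dotvC -qformE qH_up.
Qed.

Lemma f_lo x v : f x + dotv (g x) v + lmin / 2 * dotv v v <= f (x + v).
Proof.
have := taylor_lo (c := lmin * dotv v v) (f_line x v) (g_line x v v).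
rewrite scale1r scale0r addr0 mulrAC; apply => s _.
by rewrite dotvC -qformE qH_lo.
Qed.

Lemma mixed x v w h : 0 < h -> exists a b, [/\ 0 < a < h, 0 < b < h &
  f (x + h *: w + h *: v) - f (x + h *: v) - f (x + h *: w) + f x =
  (dotv (H (x + a *: v + b *: w) *m w) v * h) * h].
Proof.
move=> h0.
pose psi := (fun s => f (x + h *: w + s *: v)) - (fun s => f (x + s *: v)).
have dpsi : forall s : R, is_derive s (1:R) psi
    (dotv (g (x + h *: w + s *: v)) v - dotv (g (x + s *: v)) v).
  by move=> s; apply: is_deriveB; apply: f_line.
have [xi xi0h E1] := MVT h0 (fun s _ => dpsi s) (cont_of_derive dpsi).
pose chi := fun t => dotv (g ((x + xi *: v) + t *: w)) v.
have dchi : forall t : R, is_derive t (1:R) chi (dotv (H ((x + xi *: v) + t *: w) *m w) v).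
  by move=> t; apply: g_line.
have [eta eta0h E2] := MVT h0 (fun s _ => dchi s) (cont_of_derive dchi).
exists xi, eta; split.
- by rewrite !(itvP xi0h).
- by rewrite !(itvP eta0h).
rewrite -[h in _ * h * h]subr0 -E2 /chi scale0r addr0 -[x + xi *: v + h *: w]addrAC.
move: E1; rewrite /psi !fctE !scale0r !addr0 subr0 => E1.
have -> : f (x + h *: w + h *: v) - f (x + h *: v) - f (x + h *: w) + f x =
  f (x + h *: w + h *: v) - f (x + h *: v) - (f (x + h *: w) - f x) by ring.
by rewrite E1.
Qed.

Lemma entry_le (A : 'M[R]_d) i j : `|A i j| <= `|A|.
Proof.
rewrite [leRHS]/Num.Def.normr /= mx_normrE; apply/bigmax_geP; right => /=.
by exists (i, j).
Qed.

Definition Cvw (v w : vec) : R := \sum_(i < d) (\sum_(j < d) `|w j 0|) * `|v i 0|.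

Lemma Cvw_ge0 v w : 0 <= Cvw v w.
Proof. by apply: sumr_ge0 => i _; rewrite mulr_ge0 // sumr_ge0. Qed.

Lemma dot_lip (A : 'M[R]_d) v w : `|dotv (A *m w) v| <= `|A| * Cvw v w.
Proof.
rewrite /dotv /Cvw; apply: le_trans (ler_norm_sum _ _ _) _.
rewrite mulr_sumr; apply: ler_sum => i _.
rewrite normrM mxE mulrA ler_wpM2r //.
apply: le_trans (ler_norm_sum _ _ _) _.
rewrite mulr_sumr; apply: ler_sum => j _.
by rewrite normrM ler_wpM2r // entry_le.
Qed.

Hypothesis Hcont : continuous H.

Lemma near_H x e : 0 < e -> exists2 r, 0 < r & forall y, `|x - y| < r -> `|H x - H y| < e.
Proof.
move=> e0; have := @Hcont x; move/cvgrPdist_lt => /(_ e e0).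
by move/nbhs_normP => [r r0 hr]; exists r => // y hy; apply: hr.
Qed.

Lemma H_symb_aux x v w : dotv (H x *m w) v = dotv (H x *m v) w.
Proof.
set k1 := dotv (H x *m w) v; set k2 := dotv (H x *m v) w.
have : `|k1 - k2| <= 0.
  apply/ler_addgt0Pr => e e0; rewrite add0r.
  set C := Cvw v w + Cvw w v + 1.
  have C0 : 0 < C by rewrite ltr_wpDl // addr_ge0 // Cvw_ge0.
  have [r r0 hr] := near_H x (divr_gt0 e0 C0).
  set N := `|v| + `|w| + 1.
  have N0 : 0 < N by rewrite ltr_wpDl // addr_ge0.
  have [h [h0 hN]] : exists h, 0 < h /\ h * (`|v| + `|w|) < r.
    exists (r / N); split; first by rewrite divr_gt0.
    by rewrite mulrAC ltr_pdivrMr // ltr_pM2l // /N ltrDl.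
  have [a [b [ha hb E1]]] := mixed x v w h0.
  have [a' [b' [ha' hb' E2]]] := mixed x w v h0.
  have E : dotv (H (x + a *: v + b *: w) *m w) v = dotv (H (x + a' *: w + b' *: v) *m v) w.
    have hh : h * h != 0 by rewrite mulf_neq0 // gt_eqF.
    apply: (mulIf hh); rewrite !mulrA -E1 -E2.
    by rewrite [x + h *: w + h *: v]addrAC; ring.
  have close : forall a b (p q : vec), 0 < a < h -> 0 < b < h -> h * (`|p| + `|q|) < r ->
      `|x - (x + a *: p + b *: q)| < r.
    move=> a0 b0 p q /andP[a00 a0h] /andP[b00 b0h] hpq.
    rewrite -addrA opprD addrA subrr sub0r normrN.
    apply: le_lt_trans (ler_normD _ _) _.
    rewrite !normrZ !ger0_norm ?ltW //.
    apply: le_lt_trans _ hpq.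
    by rewrite mulrDr lerD // ler_wpM2r // ltW.
  have d1 := hr _ (close _ _ _ _ ha hb hN).
  have hN' : h * (`|w| + `|v|) < r by rewrite addrC.
  have d2 := hr _ (close _ _ _ _ ha' hb' hN').
  set y1 := x + a *: v + b *: w in d1 E; set y2 := x + a' *: w + b' *: v in d2 E.
  have -> : k1 - k2 = dotv ((H x - H y1) *m w) v + dotv ((H y2 - H x) *m v) w.
    by rewrite !mulmxBl !dotvBl E /k1 /k2; ring.
  apply: le_trans (ler_normD _ _) _.
  have l1 := dot_lip (H x - H y1) v w.
  have l2 := dot_lip (H y2 - H x) w v.
  rewrite distrC in d2.
  have c1 := Cvw_ge0 v w; have c2 := Cvw_ge0 w v.
  have : `|H x - H y1| * Cvw v w + `|H y2 - H x| * Cvw w v <= e / C * (Cvw v w + Cvw w v).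
    by rewrite mulrDr lerD // ler_wpM2r // ltW.
  have : e / C * (Cvw v w + Cvw w v) <= e.
    rewrite mulrAC ler_pdivrMr // ler_pM2l // /C lerDl //.
  move=> h1 h2; apply: le_trans h1; apply: le_trans h2.
  exact: lerD.
by rewrite normr_le0 subr_eq0 => /eqP.
Qed.

Lemma H_symb x : symb (H x).
Proof. by move=> u v; rewrite dotvC H_symb_aux dotvC. Qed.

Variable xs : vec.
Hypotheses (Hmin : forall y, f xs <= f y) (Hlmin : 0 < lmin) (Hlle : lmin <= lmax).

Lemma gap_le x : f x - f xs <= dotv (g x) (g x) / (2 * lmin).
Proof.
have := f_lo x (xs - x); rewrite (addrC x (xs - x)) subrK.
set u := xs - x; set G := dotv (g x) (g x).
have hsq := dotvv_ge0 (g x + lmin *: u).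
rewrite !dotvDl !dotvDr !dotvZl !dotvZr (dotvC u (g x)) -/G in hsq.
move=> hlo.
rewrite ler_pdivlMr ?mulr_gt0 //.
set A := dotv (g x) u in hsq hlo *; set B := dotv u u in hsq hlo *.
have h1 : (f x - f xs) * (2 * lmin) <= (- A - lmin / 2 * B) * (2 * lmin).
  by rewrite ler_pM2r ?mulr_gt0 //; lra.
have e : (- A - lmin / 2 * B) * (2 * lmin) = - (2 * (lmin * A)) - lmin * (lmin * B) by field.
rewrite e in h1; lra.
Qed.

Lemma grad_star w : dotv (g xs) w = 0.
Proof.
have key : forall t : R, 0 <= t * dotv (g xs) w + t ^+ 2 * (lmax / 2 * dotv w w).
  move=> t; have := f_up xs (t *: w); have := Hmin (xs + t *: w).
  rewrite dotvZr dotvZl dotvZr; nra.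
have := discr_le (a := 0) (b := dotv (g xs) w / 2) (c := lmax / 2 * dotv w w).
have c0 : 0 <= lmax / 2 * dotv w w.
  by rewrite mulr_ge0 ?dotvv_ge0 // divr_ge0 // (le_trans (ltW Hlmin)).
move=> /(_ c0) h.
have : (dotv (g xs) w / 2) ^+ 2 <= 0.
  rewrite -(mul0r (lmax / 2 * dotv w w)); apply: h => t.
  have -> : 2 * t * (dotv (g xs) w / 2) = t * dotv (g xs) w by field.
  by rewrite add0r; apply: key.
move=> hh; have : dotv (g xs) w / 2 = 0.
  by apply/eqP; rewrite -sqrf_eq0 eq_le hh sqr_ge0.
by move/eqP; rewrite mulf_eq0 invr_eq0 pnatr_eq0 orbF => /eqP.
Qed.

Lemma dist_le x : lmin / 2 * dotv (x - xs) (x - xs) <= f x - f xs.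
Proof.
have := f_lo xs (x - xs); rewrite (addrC xs (x - xs)) subrK grad_star addr0.
by move=> h; rewrite lerBrDl.
Qed.

End FM.
Section AR.
Context {R : realType}.

Lemma arith (L M rho beta eps s P G D D0 : R) :
  0 < L -> L <= M -> 0 < beta -> beta < 1 / 2 -> 0 < rho -> rho < 1 ->
  0 < eps -> eps < 1 -> 0 <= P ->
  (1 - eps) * L * P <= s -> G <= (1 + eps) * M * s -> D0 <= G / (2 * L) ->
  ((beta * s <= D /\ s - M / 2 * P <= D) \/
   (exists nu, [/\ 0 < nu, - (nu * beta * s) < - (nu * s) + M / 2 * (nu ^+ 2 * P) &
                   rho * nu * beta * s <= D])) ->
  4 * rho * beta * (1 - beta) * (1 - eps) / ((M / L) ^+ 2 * (1 + eps)) * D0 <= D.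
Proof.
move=> L0 LM b0 b1 r0 r1 e0 e1 P0 hs hG hD0 hcase.
set a := 1 - eps.
have a0 : 0 < a by rewrite /a subr_gt0.
have a1 : a <= 1 by rewrite /a lerBlDr lerDl ltW.
have M0 : 0 < M by apply: lt_le_trans LM.
have s0 : 0 <= s by apply: le_trans hs; rewrite !mulr_ge0 // ltW.
set K := 2 * rho * beta * (1 - beta) * a * L / M.
have hb1 : 0 <= 1 - beta by lra.
have K0 : 0 <= K.
  rewrite /K; apply: divr_ge0; last exact: ltW.
  by rewrite !mulr_ge0 // ltW.
have phi0 : 0 <= 4 * rho * beta * (1 - beta) * a / ((M / L) ^+ 2 * (1 + eps)).
  apply: divr_ge0; last by rewrite mulr_ge0 ?sqr_ge0 //; lra.
  by rewrite !mulr_ge0 // ltW.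
have step1 : 4 * rho * beta * (1 - beta) * a / ((M / L) ^+ 2 * (1 + eps)) * D0 <= K * s.
  apply: le_trans (ler_wpM2l phi0 (le_trans hD0 (ler_wpM2r _ hG))) _.
    by rewrite invr_ge0 mulr_ge0 // ltW.
  rewrite le_eqVlt; apply/orP; left; apply/eqP.
  rewrite /K; field.
  have ep : 0 < 1 + eps by lra.
  by rewrite (gt_eqF M0) (gt_eqF L0) (gt_eqF ep).
apply: le_trans step1 _.
case: hcase => [[hD1 hD2]|[nu [nu0 hfail hD]]].
  have [big|small] := leP (2 * rho * (1 - beta) * a * L) M.
    have Kb : K <= beta.
      rewrite /K ler_pdivrMr //.
      have -> : 2 * rho * beta * (1 - beta) * a * L = beta * (2 * rho * (1 - beta) * a * L) by ring.
      by rewrite ler_pM2l.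
    by apply: le_trans hD1; rewrite ler_wpM2r.
  set u := M / (2 * a * L).
  have aL0 : 0 < a * L by rewrite mulr_gt0.
  have uh : 1 / 2 <= u.
    rewrite /u ler_pdivlMr ?mulr_gt0 //.
    have : a * L <= L by rewrite ler_piMl // ltW.
    lra.
  have ur : u < rho * (1 - beta).
    rewrite /u ltr_pdivrMr ?mulr_gt0 //; lra.
  have hP : P <= s / (a * L) by rewrite ler_pdivlMr // mulrC.
  have hD3 : s * (1 - u) <= D.
    apply: le_trans hD2; rewrite /u.
    have : M / 2 * P <= M / 2 * (s / (a * L)) by rewrite ler_wpM2l // divr_ge0 // ltW.
    suff -> : M / 2 * (s / (a * L)) = s * (M / (2 * a * L)) by lra.
    by field; rewrite ?(gt_eqF a0) ?(gt_eqF L0) ?(gt_eqF M0).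
  apply: le_trans hD3; rewrite mulrC ler_wpM2l //.
  have Ku : K = rho * beta * (1 - beta) / u.
    by rewrite /K /u; field; rewrite ?(gt_eqF a0) ?(gt_eqF L0) ?(gt_eqF M0).
  rewrite Ku ler_pdivrMr; last by lra.
  set r := rho * (1 - beta) in ur.
  have : rho * beta * (1 - beta) <= r * (1 - r).
    rewrite /r; have : 0 <= rho * (1 - beta) * ((1 - rho) * (1 - beta)).
      by rewrite !mulr_ge0 //; lra.
    nra.
  nra.
have hfail2 : (1 - beta) * s < M / 2 * (nu * P).
  have : nu * ((1 - beta) * s) < nu * (M / 2 * (nu * P)).
    have -> : nu * (M / 2 * (nu * P)) = M / 2 * (nu ^+ 2 * P) by ring.
    lra.
  by rewrite ltr_pM2l.
apply: le_trans hD.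
have e1' : K * s = rho * beta * (2 * a * L / M) * ((1 - beta) * s).
  by rewrite /K; field; rewrite ?(gt_eqF a0) ?(gt_eqF L0) ?(gt_eqF M0).
rewrite e1'.
have c0 : 0 <= rho * beta * (2 * a * L / M).
  by rewrite !mulr_ge0 ?invr_ge0 ?ltW.
apply: le_trans (ler_wpM2l c0 (ltW hfail2)) _.
have -> : rho * beta * (2 * a * L / M) * (M / 2 * (nu * P)) = rho * nu * beta * (a * L * P).
  by field; rewrite ?(gt_eqF a0) ?(gt_eqF L0) ?(gt_eqF M0).
rewrite ler_wpM2l // ?mulr_ge0 ?ltW //.
Qed.

End AR.

Unset Implicit Arguments.
Theorem mainTheorem3 (R : realType) (d : nat)
  (f : 'cV[R]_d -> R) (g : 'cV[R]_d -> 'cV[R]_d) (H : 'cV[R]_d -> 'M[R]_d)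
  (lmin lmax : R) (xs : 'cV[R]_d)
  (* f is C^2 with gradient g and Hessian H *)
  (Hfd : forall x, differentiable f x)
  (Hgrad : forall x v, 'd f x v = dotv (g x) v)
  (Hgd : forall x, differentiable g x)
  (Hhess : forall x v, 'd g x v = H x *m v)
  (Hcont : continuous H)
  (Hlmin : 0 < lmin) (Hlle : lmin <= lmax)
  (Hbounds : forall x, loewner_le (lmin%:M) (H x) /\ loewner_le (H x) (lmax%:M))
  (Hmin : forall y, f xs <= f y)
  (* algorithm inputs *)
  (x0 : 'cV[R]_d) (w : nat -> R) (beta rho : R)
  (Hwpos : forall t, 0 < w t) (Hwmon : forall t, w t <= w t.+1)
  (Hbeta : 0 < beta /\ beta < 1 / 2) (Hrho : 0 < rho /\ rho < 1)
  (* a realization of the run *)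
  (E Ht : nat -> 'M[R]_d) (p x : nat -> 'cV[R]_d)
  (Hrun : is_run f g H w beta rho x0 E Ht p x)
  (eps : R) (T1 : nat) (Heps : 0 < eps /\ eps < 1)
  (HT1 : forall t, (T1 <= t)%N ->
     loewner_le (((1 - eps) * lmin)%:M) (Ht t) /\
     loewner_le (Ht t) (((1 + eps) * lmax)%:M)) :
  let kappa := lmax / lmin in
  let phi := 4 * rho * beta * (1 - beta) * (1 - eps) / (kappa ^+ 2 * (1 + eps)) in
  (forall t, (T1 <= t)%N -> f (x t.+1) - f xs <= (1 - phi) * (f (x t) - f xs)) /\
  (forall t, (T1 <= t)%N ->
     enorm (x t - xs) <= Num.sqrt (2 / lmin * (f x0 - f xs) * (1 - phi) ^+ (t - T1))) /\
  (forall t, (T1 <= t)%N ->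
     Anorm (H xs) (x t - xs) <= Num.sqrt (2 * kappa * (f x0 - f xs) * (1 - phi) ^+ (t - T1))).
Proof.
move=> kappa phi.
case: Hrun => Hx0 HEsym HHt Hp Hstep.
have fup := f_up Hfd Hgrad Hgd Hhess Hbounds.
have gap := gap_le Hfd Hgrad Hgd Hhess Hbounds xs Hlmin.
have dist := dist_le Hfd Hgrad Hgd Hhess Hbounds Hmin Hlmin Hlle.
have Hsy := H_symb Hfd Hgrad Hgd Hhess Hcont.
have [b0 b1] := Hbeta; have [r0 r1] := Hrho; have [e0 e1] := Heps.
have L0 := Hlmin.
have M0 : 0 < lmax by apply: lt_le_trans Hlle.
have Hsym : forall t, symb (Ht t).
  elim => [|t IH]; rewrite HHt; apply: symbD; apply: symbZ => //.
  - exact: symb0.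
  - by apply: symbD; [exact: Hsy | exact: symb_tr].
  - by apply: symbD; [exact: Hsy | exact: symb_tr].
have Hmono : forall t, f (x t.+1) <= f (x t).
  move=> t; have := Hstep t; case: asboolP => [_ -> //| hn].
  move=> [j [harm _ ->]].
  have hneg : dotv (g (x t)) (p t) < 0.
    rewrite ltNge; apply/negP => h; apply: hn; by right.
  apply: le_trans harm _.
  have hrb : 0 <= rho ^+ j * beta by rewrite mulr_ge0 ?exprn_ge0 ?ltW.
  by rewrite gerDl; apply: mulr_ge0_le0 hrb (ltW hneg).
have Hcontr : forall t, (T1 <= t)%N -> f (x t.+1) - f xs <= (1 - phi) * (f (x t) - f xs).
  move=> t ht; have [Hlo Hup] := HT1 t ht.
  have hA_lo : forall v, (1 - eps) * lmin * dotv v v <= qform (Ht t) v.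
    by move=> v; rewrite -qform_scalar; apply: Hlo.
  have hA_up : forall v, qform (Ht t) v <= (1 + eps) * lmax * dotv v v.
    by move=> v; rewrite -qform_scalar; apply: Hup.
  have m0 : 0 < (1 - eps) * lmin by rewrite mulr_gt0 // subr_gt0.
  have hsol : exists q, Ht t *m q = - g (x t) := solvable_pd m0 hA_lo (- g (x t)).
  have hpt := Hp t hsol.
  set s := qform (Ht t) (p t).
  set P := dotv (p t) (p t).
  set G := dotv (g (x t)) (g (x t)).
  have hgp : dotv (g (x t)) (p t) = - s.
    have -> : g (x t) = - (Ht t *m p t) by rewrite hpt opprK.
    by rewrite dotvNl dotvC -qformE.
  have P0 : 0 <= P := dotvv_ge0 _.
  have hs : (1 - eps) * lmin * P <= s := hA_lo (p t).
  have hpos : forall v, 0 <= qform (Ht t) v.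
    by move=> v; apply: le_trans (hA_lo v); rewrite mulr_ge0 ?dotvv_ge0 // ltW.
  have hG : G <= (1 + eps) * lmax * s.
    have -> : G = dotv (Ht t *m p t) (Ht t *m p t) by rewrite /G hpt dotvNl dotvNr opprK.
    apply: cs_bound => //; rewrite mulr_ge0 ?ltW //; lra.
  have hD0 := gap (x t).
  have D00 : 0 <= f (x t) - f xs by rewrite subr_ge0.
  suff key : phi * (f (x t) - f xs) <= f (x t) - f (x t.+1).
    by rewrite mulrBl mul1r; lra.
  have := Hstep t; case: asboolP => [hc ->| hn].
    case: hc => [hc|hc]; first by exfalso; apply: hc.
    rewrite hgp oppr_ge0 in hc.
    have hG0 : G <= 0.
      apply: le_trans hG _; apply: mulr_ge0_le0 => //; rewrite mulr_ge0 ?ltW //; lra.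
    have : f (x t) - f xs <= 0.
      apply: le_trans hD0 _; rewrite pmulr_lle0 // invr_gt0 mulr_gt0 //.
    move=> hle; have -> : f (x t) - f xs = 0 by apply/eqP; rewrite eq_le hle D00.
    by rewrite mulr0 subrr.
  move=> [j [harm hfail ->]].
  rewrite /phi /kappa.
  apply: (arith L0 Hlle b0 b1 r0 r1 e0 e1 P0 hs hG hD0).
  rewrite /armijo hgp in harm.
  case: j harm hfail => [|j] harm hfail.
    left; rewrite expr0 scale1r mul1r in harm *.
    split; first by lra.
    by have := fup (x t) (p t); rewrite hgp -/P; lra.
  right; exists (rho ^+ j); split.
  - by rewrite exprn_gt0.
  - have := hfail j (ltnSn j); rewrite /armijo hgp => /negP; rewrite -ltNge => hf.
    have := fup (x t) (rho ^+ j *: p t); rewrite dotvZr dotvZl dotvZr hgp -/P.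
    lra.
  - rewrite exprS in harm *; lra.
have F00 : 0 <= f x0 - f xs by rewrite subr_ge0.
have k1 : 1 <= kappa by rewrite /kappa ler_pdivlMr // mul1r.
have k2 : 1 <= kappa ^+ 2 by rewrite exprn_ege1.
have den0 : 0 < kappa ^+ 2 * (1 + eps) by rewrite mulr_gt0 //; lra.
have phi0 : 0 <= phi.
  rewrite /phi; apply: divr_ge0; last exact: ltW den0.
  have : 0 <= 1 - beta by lra.
  have : 0 <= 1 - eps by lra.
  by move=> ha hb; rewrite !mulr_ge0 // ltW.
have phi1 : phi <= 1.
  rewrite /phi ler_pdivrMr // mul1r.
  have -> : 4 * rho * beta * (1 - beta) * (1 - eps) =
    (4 * beta * (1 - beta)) * (rho * (1 - eps)) by ring.
  have n1 : 4 * beta * (1 - beta) <= 1 by nra.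
  have n2 : rho * (1 - eps) <= 1 by nra.
  have n3 : 0 <= rho * (1 - eps) by rewrite mulr_ge0 ?ltW //; lra.
  have n4 : 1 <= kappa ^+ 2 * (1 + eps) by nra.
  apply: le_trans n4.
  apply: le_trans (ler_wpM2r n3 n1) _; lra.
have phi01 : 0 <= 1 - phi by lra.
have mono0 : forall t, f (x t) <= f x0.
  elim => [|t IH]; first by rewrite Hx0.
  exact: le_trans (Hmono t) IH.
have iter : forall k, f (x (T1 + k)%N) - f xs <= (1 - phi) ^+ k * (f x0 - f xs).
  elim => [|k IH].
    by rewrite addn0 expr0 mul1r lerD2r.
  rewrite addnS; apply: le_trans (Hcontr _ (leq_addr _ _)) _.
  by rewrite exprS -mulrA ler_wpM2l.
have bnd : forall t, (T1 <= t)%N ->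
    dotv (x t - xs) (x t - xs) <= 2 / lmin * (f x0 - f xs) * (1 - phi) ^+ (t - T1).
  move=> t ht; have := iter (t - T1)%N; rewrite subnKC // => h.
  have hd := dist (x t).
  set U := dotv (x t - xs) (x t - xs) in hd *.
  have -> : U = 2 / lmin * (lmin / 2 * U) by field; rewrite gt_eqF.
  have c0 : 0 <= 2 / lmin by rewrite divr_ge0 ?ltW.
  apply: le_trans (_ : _ <= 2 / lmin * (f (x t) - f xs)) _.
    by rewrite ler_wpM2l.
  have -> : 2 / lmin * (f x0 - f xs) * (1 - phi) ^+ (t - T1) =
    2 / lmin * ((1 - phi) ^+ (t - T1) * (f x0 - f xs)) by ring.
  by rewrite ler_wpM2l.
have rhs0 : forall t, 0 <= 2 / lmin * (f x0 - f xs) * (1 - phi) ^+ (t - T1).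
  by move=> t; rewrite mulr_ge0 ?exprn_ge0 // mulr_ge0 // divr_ge0 // ltW.
split; first exact: Hcontr.
split => t ht.
  by rewrite /enorm ler_sqrt // bnd.
have -> : 2 * kappa * (f x0 - f xs) * (1 - phi) ^+ (t - T1) =
  lmax * (2 / lmin * (f x0 - f xs) * (1 - phi) ^+ (t - T1)).
  by rewrite /kappa; field; rewrite gt_eqF.
rewrite /Anorm ler_sqrt; last by rewrite mulr_ge0 // ltW.
apply: le_trans (qH_up Hbounds _ _) _.
by rewrite ler_wpM2l ?(ltW M0) //; apply: bnd.
Qed.
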